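(* Let $\kappa > \omega$ be a regular cardinal. Suppose $F \subseteq [\kappa]^\kappa$ is an unreaped family with $|F| = \mathfrak{r}(\kappa)$, and suppose there is a club $E_1 \subseteq \kappa$ such that for every club $E \subseteq E_1$ there exists $A \in F$ with $|A \setminus \mathrm{set}(E, E_1)| < \kappa$. Then $\mathfrak{d}(\kappa) \leq \mathfrak{r}(\kappa)$.
   Context: For $A \in [\kappa]^\kappa$ define $s_A:\kappa\to A$ by $s_A(\alpha) = \min(A \setminus (\alpha+1))$. For clubs $E_2 \subseteq E_1 \subseteq \kappa$ and $\xi \in \kappa$ let $\mathrm{set}(E_1,\xi) = \{\zeta : \xi \leq \zeta < s_{E_1}(\xi)\}$ and $\mathrm{set}(E_2,E_1) = \bigcup\{\mathrm{set}(E_1,\xi) : \xi \in E_2\}$. For $F \subseteq [\kappa]^\kappa$ and $B \subseteq \kappa$, $B$ reaps $F$ if $|A \cap B| = |A \cap (\kappa \setminus B)| = \kappa$ for every $A \in F$; $F$ is unreaped if no $B \subseteq \kappa$ reaps $F$; $\mathfrak{r}(\kappa)$ is the least size of an unreaped family in $[\kappa]^\kappa$. For $f,g\in\kappa^\kappa$, $f \leq^* g$ means $|\{\alpha : g(\alpha)<f(\alpha)\}|<\kappa$; $F\subseteq \kappa^\kappa$ is dominating if every $g \in \kappa^\kappa$ satisfies $g \leq^* f$ for some $f\in F$; $\mathfrak{d}(\kappa)$ is the least size of a dominating family. *)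

(* Defs.v *)
(* The regular cardinal kappa is modelled as a type K carrying a
   strict well-order lt (its elements are the ordinals < kappa). *)
Set Implicit Arguments.

Section KappaDefs.
Variable K : Type.
Variable lt : K -> K -> Prop.

Definition le (x y : K) : Prop := lt x y \/ x = y.

(* |X| >= kappa (for X a subset of kappa, this is |X| = kappa) *)
Definition size_kappa (X : K -> Prop) : Prop :=
  exists f : K -> {x : K | X x}, forall a b, f a = f b -> a = b.

Definition small (X : K -> Prop) : Prop := ~ size_kappa X.

Definition regular_uncountable_cardinal : Prop :=
  (forall x, ~ lt x x) /\
  (forall x y z, lt x y -> lt y z -> lt x z) /\
  (forall x y, lt x y \/ x = y \/ lt y x) /\
  well_founded lt /\
  (* kappa is a cardinal: every initial segment has size < kappa *)
  (forall a, small (fun b => lt b a)) /\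
  (~ exists f : K -> nat, forall a b, f a = f b -> a = b) /\
  (* regularity: every unbounded subset has size kappa *)
  (forall X : K -> Prop, (forall a, exists b, X b /\ le a b) -> size_kappa X).

Definition unbounded (C : K -> Prop) : Prop :=
  forall a, exists b, C b /\ le a b.

Definition closed (C : K -> Prop) : Prop :=
  forall a, (exists g, C g /\ lt g a) ->
            (forall b, lt b a -> exists g, C g /\ lt b g /\ lt g a) -> C a.

Definition club (C : K -> Prop) : Prop := closed C /\ unbounded C.

(* s = s_A(a) = min (A \ (a+1)) *)
Definition is_next (A : K -> Prop) (a s : K) : Prop :=
  A s /\ lt a s /\ forall e, A e -> lt a e -> le s e.

Definition set1 (E1 : K -> Prop) (xi : K) (z : K) : Prop :=
  exists s, is_next E1 xi s /\ le xi z /\ lt z s.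

Definition set2 (E2 E1 : K -> Prop) (z : K) : Prop :=
  exists xi, E2 xi /\ set1 E1 xi z.

Definition in_kk (F : (K -> Prop) -> Prop) : Prop :=
  forall A, F A -> size_kappa A.

Definition reaps (B : K -> Prop) (F : (K -> Prop) -> Prop) : Prop :=
  forall A, F A -> size_kappa (fun x => A x /\ B x) /\
                   size_kappa (fun x => A x /\ ~ B x).

Definition unreaped (F : (K -> Prop) -> Prop) : Prop :=
  ~ exists B, reaps B F.

Definition le_star (f g : K -> K) : Prop := small (fun a => lt (g a) (f a)).

Definition dominating (D : (K -> K) -> Prop) : Prop :=
  forall g, exists f, D f /\ le_star g f.
End KappaDefs.

Definition card_le (T U : Type) (P : T -> Prop) (Q : U -> Prop) : Prop :=
  exists f : {x : T | P x} -> {y : U | Q y}, forall a b, f a = f b -> a = b.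

(* Main.v *)
From Stdlib Require Import Classical ClassicalEpsilon ProofIrrelevance.
Require Import Defs.
Set Implicit Arguments.

Ltac dk Hk := destruct Hk as (Hirr & Htr & Htot & Hwf & Hseg & Hnat & Hreg).

Lemma wf_min (K : Type) (lt : K -> K -> Prop) (Hwf : well_founded lt) (P : K -> Prop) :
  (exists x, P x) -> exists x, P x /\ forall y, P y -> ~ lt y x.
Proof.
  intros [x0 Hx0]. apply NNPP; intro Hn.
  assert (H : forall x, ~ P x).
  { intro x. induction x as [x IH] using (well_founded_ind Hwf).
    intro Px. apply Hn. exists x. split; auto. intros y Py Hy. exact (IH y Hy Py). }
  exact (H x0 Hx0).
Qed.

Lemma small_sub (K : Type) (X Y : K -> Prop) :
  (forall x, X x -> Y x) -> small Y -> small X.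
Proof.
  intros HXY HY [f Hf]. apply HY.
  exists (fun k => exist _ (proj1_sig (f k)) (HXY _ (proj2_sig (f k)))).
  intros a b E. apply Hf. apply eq_sig_hprop. { intros; apply proof_irrelevance. }
  apply (f_equal (@proj1_sig _ _)) in E. exact E.
Qed.

Lemma small_image (K : Type) (g : K -> K) (X : K -> Prop) :
  small X -> small (fun z => exists y, X y /\ z = g y).
Proof.
  intros HX [h Hh]. apply HX.
  exists (fun k => let s := constructive_indefinite_description _ (proj2_sig (h k)) in
           exist _ (proj1_sig s) (proj1 (proj2_sig s))).
  intros a b E. apply Hh. apply eq_sig_hprop. { intros; apply proof_irrelevance. }
  apply (f_equal (@proj1_sig _ _)) in E. simpl in E.
  pose proof (proj2_sig (constructive_indefinite_description _ (proj2_sig (h a)))) as [_ Ea].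
  pose proof (proj2_sig (constructive_indefinite_description _ (proj2_sig (h b)))) as [_ Eb].
  rewrite Ea, Eb, E. reflexivity.
Qed.

Lemma small_bounded (K : Type) (lt : K -> K -> Prop) (Hk : regular_uncountable_cardinal lt)
  (X : K -> Prop) : small X -> exists c, forall x, X x -> lt x c.
Proof.
  dk Hk. intros HX. apply NNPP; intro Hn. apply HX. apply Hreg.
  intro a. apply NNPP; intro Ha. apply Hn. exists a. intros x Xx.
  destruct (Htot x a) as [H|[H|H]]; auto; exfalso; apply Ha; exists x; split; auto;
    unfold le; auto.
Qed.

Lemma no_max (K : Type) (lt : K -> K -> Prop) (Hk : regular_uncountable_cardinal lt) :
  forall m, exists b, lt m b.
Proof.
  generalize Hk; intro Hk'. dk Hk. intro m. apply NNPP; intro Hm.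
  assert (Hlem : forall x, le lt x m).
  { intro x. destruct (Htot x m) as [H|[H|H]]; unfold le; auto.
    exfalso; apply Hm; eauto. }
  set (nxt := fun x => epsilon (inhabits m) (fun y => lt x y /\ forall z, lt x z -> le lt y z)).
  assert (Hnxt : forall x, lt x m -> lt x (nxt x) /\ forall z, lt x z -> le lt (nxt x) z).
  { intros x Hx. unfold nxt. apply epsilon_spec.
    destruct (wf_min Hwf (fun z => lt x z)) as [y [Hy Hmin]]; [eauto|].
    exists y. split; auto. intros z Hz. destruct (Htot y z) as [H|[H|H]]; unfold le; auto.
    exfalso; exact (Hmin z Hz H). }
  destruct (wf_min Hwf (fun _ => True)) as [e0 [_ He0]]; [exists m; auto|].
  set (e := fix e n := match n with 0 => e0 | S n => nxt (e n) end).
  destruct (classic (exists N, e N = m)) as [[N HN]|HnN].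
  - assert (Hcov : forall n x, le lt x (e n) -> exists k, x = e k).
    { induction n as [|n IH]; intros x Hx.
      - destruct Hx as [Hx|Hx]; [exfalso; exact (He0 x I Hx)|]. exists 0; auto.
      - destruct Hx as [Hx|Hx]; [|exists (S n); auto].
        destruct (Htot x (e n)) as [H|[H|H]].
        + apply IH; left; auto.
        + exists n; auto.
        + assert (Hen : lt (e n) m).
          { destruct (Hlem x) as [H2|H2]; [eauto|rewrite <- H2; exact H]. }
          destruct (proj2 (Hnxt _ Hen) x H) as [H3|H3].
          * exfalso. apply (Hirr x). eauto.
          * exfalso. simpl in Hx. rewrite H3 in Hx. exact (Hirr x Hx). }
    apply Hnat.
    exists (fun x => proj1_sig (constructive_indefinite_description _
                     (Hcov N x (eq_ind_r (fun y => le lt x y) (Hlem x) HN)))).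
    intros a b E.
    pose proof (proj2_sig (constructive_indefinite_description _
                     (Hcov N a (eq_ind_r (fun y => le lt a y) (Hlem a) HN)))) as Ea.
    pose proof (proj2_sig (constructive_indefinite_description _
                     (Hcov N b (eq_ind_r (fun y => le lt b y) (Hlem b) HN)))) as Eb.
    simpl in Ea, Eb. rewrite Ea, Eb, E. reflexivity.
  - assert (Hlt : forall n, lt (e n) m).
    { intro n. destruct (Hlem (e n)) as [H|H]; auto. exfalso; eauto. }
    assert (Hinc : forall n, lt (e n) (e (S n))).
    { intro n. exact (proj1 (Hnxt _ (Hlt n))). }
    assert (Hmono : forall n k, n < k -> lt (e n) (e k)).
    { intros n k Hnk. induction Hnk; eauto. }
    assert (Heinj : forall n k, e n = e k -> n = k).
    { intros n k E. destruct (PeanoNat.Nat.lt_trichotomy n k) as [H|[H|H]]; auto;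
      exfalso; apply Hmono in H; rewrite E in H; eapply Hirr; eauto. }
    set (psi := fun x => match excluded_middle_informative (x = m) with
                | left _ => e 0
                | right _ => match excluded_middle_informative (exists n, x = e n) with
                             | left _ => nxt x | right _ => x end end).
    assert (Hpsi : forall x, lt (psi x) m).
    { intro x. unfold psi.
      destruct (excluded_middle_informative (x = m)) as [Hxm|Hxm]; auto.
      destruct (excluded_middle_informative (exists n, x = e n)) as [[n Hn]|Hn].
      - subst x. exact (Hlt (S n)).
      - destruct (Hlem x) as [H|H]; auto; contradiction. }
    apply (Hseg m). exists (fun x => exist _ (psi x) (Hpsi x)).
    intros a b E. apply (f_equal (@proj1_sig _ _)) in E. simpl in E. unfold psi in E.
    destruct (excluded_middle_informative (a = m)) as [Ha|Ha];
    destruct (excluded_middle_informative (b = m)) as [Hb|Hb]; try congruence.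
    + destruct (excluded_middle_informative (exists n, b = e n)) as [[n Hn]|Hn].
      * subst b. change (e 0 = e (S n)) in E. apply Heinj in E. discriminate.
      * exfalso; apply Hn; exists 0; auto.
    + destruct (excluded_middle_informative (exists n, a = e n)) as [[n Hn]|Hn].
      * subst a. change (e (S n) = e 0) in E. apply Heinj in E. discriminate.
      * exfalso; apply Hn; exists 0; auto.
    + destruct (excluded_middle_informative (exists n, a = e n)) as [[n Hn]|Hn];
      destruct (excluded_middle_informative (exists n, b = e n)) as [[k Hk]|Hk].
      * subst a b. change (e (S n) = e (S k)) in E. apply Heinj in E. congruence.
      * exfalso. apply Hk. exists (S n). subst a. rewrite <- E. reflexivity.
      * exfalso. apply Hn. exists (S k). subst b. rewrite E. reflexivity.
      * exact E.
Qed.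

Lemma next_exists (K : Type) (lt : K -> K -> Prop) (Hk : regular_uncountable_cardinal lt)
  (X : K -> Prop) (a : K) : (exists b, X b /\ lt a b) -> exists s, is_next lt X a s.
Proof.
  dk Hk. intro H.
  destruct (wf_min Hwf (fun b => X b /\ lt a b) H) as [s [[Xs Hs] Hmin]].
  exists s. split; [auto|split; auto]. intros e' Xe He.
  destruct (Htot s e') as [H1|[H1|H1]]; unfold le; auto.
  exfalso; exact (Hmin e' (conj Xe He) H1).
Qed.

Lemma sk_unb (K : Type) (lt : K -> K -> Prop) (Hk : regular_uncountable_cardinal lt)
  (A : K -> Prop) : size_kappa A -> forall a, exists b, A b /\ lt a b.
Proof.
  intros HA a. generalize Hk; intro Hk'. dk Hk. apply NNPP; intro Hn.
  destruct (no_max Hk' a) as [a' Ha'].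
  apply (small_sub (X := A) (Y := fun b => lt b a')); [|apply Hseg|exact HA].
  intros x Ax. destruct (Htot a x) as [H|[H|H]]; [exfalso; eauto| subst; auto| eauto].
Qed.

Lemma club_unb_lt (K : Type) (lt : K -> K -> Prop) (Hk : regular_uncountable_cardinal lt)
  (E : K -> Prop) : club lt E -> forall a, exists b, E b /\ lt a b.
Proof.
  intros [_ HE] a. generalize Hk; intro Hk'. dk Hk.
  destruct (no_max Hk' a) as [a' Ha']. destruct (HE a') as [b [Eb Hb]].
  exists b; split; auto. destruct Hb as [Hb|Hb]; [eauto|subst; auto].
Qed.

Lemma closure_club (K : Type) (lt : K -> K -> Prop) (Hk : regular_uncountable_cardinal lt)
  (E1 : K -> Prop) (HE1 : club lt E1) (g : K -> K) :
  club lt (fun xi => E1 xi /\ forall z, lt z xi -> lt (g z) xi).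
Proof.
  generalize Hk; intro Hk'. dk Hk. destruct HE1 as [HC HU]. split.
  - intros a [c [[Ec _] Hc]] Hlim. split.
    + apply HC. { exists c; auto. }
      intros b Hb. destruct (Hlim b Hb) as [c' [[Ec' _] H']]. eauto.
    + intros z Hz. destruct (Hlim z Hz) as [c' [[_ Hc'] [H1 H2]]]. eauto.
  - intro a.
    set (bnd := fun c => epsilon (inhabits a) (fun c' => forall z, lt z c -> lt (g z) c')).
    assert (Hbnd : forall c z, lt z c -> lt (g z) (bnd c)).
    { intro c. unfold bnd. apply epsilon_spec.
      destruct (small_bounded Hk' (small_image g (Hseg c))) as [c' Hc'].
      exists c'. intros z Hz. apply Hc'. exists z. auto. }
    set (step := fun c => epsilon (inhabits a) (fun y => E1 y /\ le lt (bnd c) y /\ le lt c y)).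
    assert (Hstep : forall c, E1 (step c) /\ le lt (bnd c) (step c) /\ le lt c (step c)).
    { intro c. unfold step. apply epsilon_spec.
      destruct (Htot (bnd c) c) as [H|[H|H]].
      - destruct (HU c) as [y [Ey Hy]]. exists y. split; [exact Ey|]. split; [|exact Hy].
        destruct Hy as [Hy|Hy]; left; [eauto|rewrite <- Hy; exact H].
      - destruct (HU c) as [y [Ey Hy]]. exists y. split; [exact Ey|]. split; [|exact Hy].
        rewrite H; exact Hy.
      - destruct (HU (bnd c)) as [y [Ey Hy]]. exists y. split; [exact Ey|]. split; [exact Hy|].
        destruct Hy as [Hy|Hy]; left; [eauto|rewrite <- Hy; exact H]. }
    set (x := fix x n := match n with 0 => a | S n => step (x n) end).
    assert (Hx1 : forall n, le lt (x n) (x (S n))) by (intro n; exact (proj2 (proj2 (Hstep (x n))))).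
    assert (Hbd : exists c, forall n, lt (x n) c).
    { apply NNPP; intro Hn.
      assert (Hs : size_kappa (fun y => exists n, y = x n)).
      { apply Hreg. intro c. apply NNPP; intro Hc. apply Hn. exists c. intro n.
        destruct (Htot (x n) c) as [H|[H|H]]; auto; exfalso; apply Hc;
          exists (x n); split; eauto; unfold le; auto. }
      destruct Hs as [h Hh]. apply Hnat.
      exists (fun k => proj1_sig (constructive_indefinite_description _ (proj2_sig (h k)))).
      intros p q E. apply Hh. apply eq_sig_hprop. { intros; apply proof_irrelevance. }
      pose proof (proj2_sig (constructive_indefinite_description _ (proj2_sig (h p)))) as Ep.
      pose proof (proj2_sig (constructive_indefinite_description _ (proj2_sig (h q)))) as Eq.
      simpl in Ep, Eq. rewrite Ep, Eq, E. reflexivity. }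
    destruct (wf_min Hwf (fun u => forall n, le lt (x n) u)) as [xi [Hxi Hmin]].
    { destruct Hbd as [c Hc]. exists c. intro n. left; auto. }
    assert (Hbel : forall b, lt b xi -> exists n, lt b (x n)).
    { intros b Hb. apply NNPP; intro Hn. apply (Hmin b); auto. intro n.
      destruct (Htot (x n) b) as [H|[H|H]]; unfold le; auto. exfalso; eauto. }
    destruct (classic (forall n, lt (x n) xi)) as [Hall|Hnall].
    + exists xi. split; [split|].
      * apply HC. { exists (x 1). split; auto. exact (proj1 (Hstep (x 0))). }
        intros b Hb. destruct (Hbel b Hb) as [n Hn]. exists (x (S n)).
        split; [exact (proj1 (Hstep (x n)))|]. split; [|auto].
        destruct (Hx1 n) as [H|H]; [eauto|rewrite <- H; auto].
      * intros z Hz. destruct (Hbel z Hz) as [n Hn].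
        pose proof (Hbnd (x n) z Hn) as H1. destruct (proj2 (Hstep (x n))) as [H2 _].
        destruct H2 as [H2|H2].
        -- apply (Htr _ _ _ (Htr _ _ _ H1 H2)). exact (Hall (S n)).
        -- rewrite H2 in H1. apply (Htr _ _ _ H1). exact (Hall (S n)).
      * exact (Hxi 0).
    + apply not_all_ex_not in Hnall. destruct Hnall as [n Hn].
      assert (Hxn : x n = xi) by (destruct (Hxi n); tauto).
      assert (HxS : x (S n) = x n).
      { destruct (Hxi (S n)) as [H|H]; destruct (Hx1 n) as [H'|H']; auto.
        - exfalso. rewrite Hxn in H'. apply (Hirr xi). eauto.
        - rewrite H. auto. }
      exists (x (S n)). split; [split|].
      * exact (proj1 (Hstep (x n))).
      * intros z Hz. rewrite HxS in Hz. pose proof (Hbnd (x n) z Hz) as H1.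
        destruct (proj2 (Hstep (x n))) as [H2 _].
        destruct H2 as [H2|H2]; [|rewrite H2 in H1]; eauto.
      * rewrite HxS, Hxn. exact (Hxi 0).
Qed.

Theorem lemma3p4 (K : Type) (lt : K -> K -> Prop)
  (Hk : regular_uncountable_cardinal lt)
  (F : (K -> Prop) -> Prop)
  (HFkk : in_kk F)
  (HFunr : unreaped F)
  (* |F| = r(kappa): F has minimal size among unreaped subfamilies of [kappa]^kappa *)
  (HFmin : forall G : (K -> Prop) -> Prop, in_kk G -> unreaped G -> card_le F G)
  (E1 : K -> Prop) (HE1 : club lt E1)
  (Hcov : forall E : K -> Prop, club lt E -> (forall x, E x -> E1 x) ->
            exists A, F A /\ small (fun x => A x /\ ~ set2 lt E E1 x)) :
  (* d(kappa) <= r(kappa) = |F| *)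
  exists D : (K -> K) -> Prop, dominating lt D /\ card_le D F.
Proof.
  generalize Hk; intro Hk'. dk Hk.
  set (nx := fun (X : K -> Prop) a => epsilon (inhabits a) (fun s => is_next lt X a s)).
  set (fA := fun (A : K -> Prop) al => nx A (nx E1 al)).
  exists (fun f => exists A, F A /\ f = fA A). split.
  - intro g.
    destruct (Hcov _ (closure_club Hk' HE1 g) (fun x H => proj1 H)) as [A [FA Hsm]].
    exists (fA A). split; [exists A; auto|].
    unfold le_star. destruct (small_bounded Hk' Hsm) as [gam Hgam].
    apply (small_sub (Y := fun b => lt b gam)); [|apply Hseg].
    intros al Hal.
    assert (Hb : is_next lt E1 al (nx E1 al)).
    { unfold nx. apply epsilon_spec. apply (next_exists Hk'). apply (club_unb_lt Hk' HE1). }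
    set (be := nx E1 al) in *.
    assert (Ha : is_next lt A be (nx A be)).
    { unfold nx. apply epsilon_spec. apply (next_exists Hk'). apply (sk_unb Hk' (HFkk A FA)). }
    set (a := nx A be) in *.
    change (lt a (g al)) in Hal.
    destruct Hb as [E1b [Hab _]]. destruct Ha as [Aa [Hba _]].
    assert (Hns : ~ set2 lt (fun xi => E1 xi /\ forall z, lt z xi -> lt (g z) xi) E1 a).
    { intros [xi [[E1xi Hg] [s [[E1s [Hxis Hmins]] [Hle Hlt]]]]].
      assert (Hbx : le lt be xi).
      { destruct (Htot be xi) as [H|[H|H]]; unfold le; auto.
        exfalso. destruct (Hmins be E1b H) as [H2|H2].
        - apply (Hirr s). eauto.
        - subst s. apply (Hirr be). eauto. }
      assert (Halxi : lt al xi) by (destruct Hbx as [H|H]; [eauto|subst; auto]).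
      pose proof (Hg al Halxi) as H1.
      destruct Hle as [H|H]; [apply (Hirr a); eauto|subst; apply (Hirr a); eauto]. }
    pose proof (Hgam a (conj Aa Hns)). eauto.
  - exists (fun p => exist _ (proj1_sig (constructive_indefinite_description _ (proj2_sig p)))
                     (proj1 (proj2_sig (constructive_indefinite_description _ (proj2_sig p))))).
    intros p q E. apply (f_equal (@proj1_sig _ _)) in E. simpl in E.
    apply eq_sig_hprop. { intros; apply proof_irrelevance. }
    pose proof (proj2 (proj2_sig (constructive_indefinite_description _ (proj2_sig p)))) as Ep.
    pose proof (proj2 (proj2_sig (constructive_indefinite_description _ (proj2_sig q)))) as Eq.
    rewrite Ep, Eq, E. reflexivity.
Qed.
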